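(* Let $D\subset\mathbb N^n$ be finite, not contained in any coordinate hyperplane, and $p$ a prime. Then (i) the sets $MI_{D,p}(r)$, $r\ge1$, are pairwise disjoint; (ii) $MI_{D,p}(r)$ is empty for $r$ large enough; (iii) $\delta_r$ maps $MI_{D,p}(r)$ to itself, and for all $i,k$ and $U\in MI_{D,p}(r)$, $\varphi_{\delta_r^kU}(i)=\varphi_U(i+k)$.
   Context: $s_p$ = base-$p$ digit sum. $E_{D,p}(r)$ = set of $U=(u_{\mathbf d})_{\mathbf d\in D}\in\{0,\dots,p^r-1\}^D$ with $\sum u_{\mathbf d}\mathbf d\equiv0\pmod{p^r-1}$ and all coordinates of $\sum u_{\mathbf d}\mathbf d$ positive; $s_p(U)=\sum s_p(u_{\mathbf d})$; $\delta_p(D)=\frac1{p-1}\min_{r\ge1}\min_{U\in E_{D,p}(r)}s_p(U)/r$; $U\in E_{D,p}(r)$ is minimal if $s_p(U)=(p-1)r\delta_p(D)$. The shift $\delta_r$ on $\{0,\dots,p^r-1\}$ sends $k\le p^r-2$ to $pk\bmod(p^r-1)$ and fixes $p^r-1$, applied coordinatewise. For $U\in E_{D,p}(r)$, $\varphi_U:\mathbb Z/r\mathbb Z\to\mathbb N_{>0}^n$, $\varphi_U(k)=\frac1{p^r-1}\sum_{\mathbf d}\mathbf d(\delta_r^kU)_{\mathbf d}$; $U$ is irreducible if $\varphi_U$ is injective; $MI_{D,p}(r)$ is the set of minimal irreducible elements of $E_{D,p}(r)$. *)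

(* Defs.v *)
From HB Require Import structures.
From mathcomp Require Import all_boot all_order all_algebra.
From mathcomp Require Import finmap.
From Stdlib Require Import ClassicalEpsilon.

Set Implicit Arguments.
Unset Strict Implicit.
Unset Printing Implicit Defensive.

Import Order.TTheory GRing.Theory Num.Theory.
Local Open Scope fset_scope.

Definition vec (n : nat) := {ffun 'I_n -> nat}.

Section Defs.
Variables (n : nat) (D : {fset vec n}) (p : nat).

Definition famD := {ffun D -> nat}.

(* base-p digit sum: sum of the base-p digits (k / p^i) mod p;
   for p >= 2 all digits of index > k vanish. *)
Definition sp (k : nat) : nat := \sum_(i < k.+1) (k %/ p ^ i) %% p.

Definition spU (U : famD) : nat := \sum_(d : D) sp (U d).

Definition wsum (U : famD) (j : 'I_n) : nat := \sum_(d : D) U d * (val d) j.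

Definition inE (r : nat) (U : famD) : bool :=
  [&& 0 < r,
      [forall d : D, U d < p ^ r],
      [forall j : 'I_n, (p ^ r - 1) %| wsum U j] &
      [forall j : 'I_n, 0 < wsum U j]].

Definition is_min_ratio (q : rat) : Prop :=
  (exists r U, inE r U /\ q = ((spU U)%:R / r%:R)%R) /\
  (forall r U, inE r U -> (q <= (spU U)%:R / r%:R)%R).

Definition delta : rat :=
  ((epsilon (inhabits 0%R) is_min_ratio) / (p.-1)%:R)%R.

Definition minimalU (r : nat) (U : famD) : Prop :=
  inE r U /\ ((spU U)%:R = (p.-1)%:R * r%:R * delta)%R.

Definition shift (r k : nat) : nat :=
  if k == p ^ r - 1 then k else (p * k) %% (p ^ r - 1).

Definition shiftU (r : nat) (U : famD) : famD := [ffun d => shift r (U d)].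

(* phi_U : Z/rZ -> N^n, evaluated on the representative k mod r *)
Definition phi (r : nat) (U : famD) (k : nat) : vec n :=
  [ffun j => wsum (iter (k %% r) (shiftU r) U) j %/ (p ^ r - 1)].

Definition irreducibleU (r : nat) (U : famD) : Prop :=
  forall i j, i < r -> j < r -> phi r U i = phi r U j -> i = j.

Definition MI (r : nat) (U : famD) : Prop := minimalU r U /\ irreducibleU r U.

End Defs.

(* Main.v *)
Require Import Defs.
From HB Require Import structures.
From mathcomp Require Import all_boot all_order all_algebra.
From mathcomp Require Import finmap.
From mathcomp Require Import zify.

Set Implicit Arguments.
Unset Strict Implicit.
Unset Printing Implicit Defensive.
Import GRing.Theory Num.Theory.

Section Aux.
Variable p : nat.
Hypothesis Hpr : prime p.
Let Hp : 1 < p := prime_gt1 Hpr.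
Let Hp0 : 0 < p := ltnW Hp.

Definition fd (N k : nat) := \sum_(i < N) (k %/ p ^ i) %% p.

Lemma fd_zero N : fd N 0 = 0.
Proof. by rewrite /fd big1 // => i _; rewrite div0n mod0n. Qed.

Lemma fdS N k : fd N.+1 k = k %% p + fd N (k %/ p).
Proof.
rewrite /fd big_ord_recl expn0 divn1; congr (_ + _).
by apply: eq_bigr => i _; rewrite lift0 expnS divnMA.
Qed.

Lemma fd_ext N M k : k < p ^ N -> k < p ^ M -> fd N k = fd M k.
Proof.
elim: N M k => [|N IH] [|M] k //.
- rewrite expn0 ltnS leqn0 => /eqP -> _; by rewrite !fd_zero.
- move=> _; rewrite expn0 ltnS leqn0 => /eqP ->; by rewrite !fd_zero.
- move=> h1 h2; rewrite !fdS; congr (_ + _); apply: IH;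
  by rewrite ltn_divLR // -expnSr.
Qed.

Lemma sp_fd N k : k < p ^ N -> sp p k = fd N k.
Proof.
move=> h; apply: (@fd_ext k.+1) h; exact: ltnW (ltn_expl _ Hp).
Qed.

Lemma fd_split N M b c : b < p ^ N -> fd (N + M) (b + p ^ N * c) = fd N b + fd M c.
Proof.
elim: N b => [|N IH] b.
- rewrite expn0 ltnS leqn0 => /eqP ->; by rewrite fd_zero mul1n.
- move=> hb; rewrite addSn !fdS expnS -mulnA (addnC b) (mulnC p (p ^ N * c)).
  rewrite modnMDl divnMDl // (addnC (p ^ N * c)) IH ?addnA //.
  by rewrite ltn_divLR // -expnSr.
Qed.

Lemma fd_eq0 N k : fd N k = 0 -> k < p ^ N -> k = 0.
Proof.
elim: N k => [|N IH] k.
- by rewrite expn0 ltnS leqn0 => _ /eqP.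
- rewrite fdS => /eqP; rewrite addn_eq0 => /andP [/eqP h1 /eqP h2] hk.
  have h3 : k %/ p = 0 by apply: (IH _ h2); rewrite ltn_divLR // -expnSr.
  by rewrite (divn_eq k p) h1 h3.
Qed.

Lemma sp_eq0 k : sp p k = 0 -> k = 0.
Proof.
have hk : k < p ^ k.+1 by exact: ltnW (ltn_expl _ Hp).
by rewrite (sp_fd hk) => /fd_eq0; apply.
Qed.

Variable r : nat.
Hypothesis Hr : 0 < r.
Local Notation m := (p ^ r - 1).

Lemma pr_gt1 : 1 < p ^ r.
Proof. have := ltn_expl r Hp; lia. Qed.

Lemma m_gt0 : 0 < m.
Proof. have := pr_gt1; lia. Qed.

Lemma shift_mod u : shift p r u = p * u %[mod m].
Proof.
rewrite /shift; case: eqP => [->|_]; last by rewrite modn_mod.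
by rewrite modnMl modnn.
Qed.

Lemma shift_lt u : u < p ^ r -> shift p r u < p ^ r.
Proof.
rewrite /shift; case: eqP => // _ _.
have := ltn_pmod (p * u) m_gt0; have := pr_gt1; lia.
Qed.

Lemma iter_shift_mod j u : u < m -> iter j (shift p r) u = p ^ j * u %% m.
Proof.
move=> hu; elim: j => [|j IH]; first by rewrite /= mul1n modn_small.
rewrite iterS IH /shift ltn_eqF ?ltn_pmod ?m_gt0 //.
by rewrite modnMmr expnS mulnA.
Qed.

Lemma iter_shift_r u : u < p ^ r -> iter r (shift p r) u = u.
Proof.
move=> hu; case: (eqVneq u m) => [->|hne].
- have H : forall j, iter j (shift p r) m = m.
    by elim => [|j IH] //=; rewrite IH /shift eqxx.
  exact: H.
- have hu' : u < m by have := pr_gt1; lia.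
  rewrite iter_shift_mod // {1}(_ : p ^ r = m + 1); last by have := pr_gt1; lia.
  by rewrite mulnDl mul1n (mulnC m u) modnMDl modn_small.
Qed.

Lemma coprime_mp : coprime m p.
Proof.
rewrite coprime_sym prime_coprime //; apply/negP => hd.
have : p %| p ^ r - m by apply: dvdn_sub => //; apply: dvdn_exp.
rewrite subKn ?expn_gt0 ?Hp0 // dvdn1 => /eqP hp1.
by move: Hp; rewrite hp1.
Qed.

Lemma shift_eq0 u : u < p ^ r -> (shift p r u == 0) = (u == 0).
Proof.
move=> hu; rewrite /shift; have [//|hne] := eqVneq u m.
have [hu0|hu0] := eqVneq u 0; first by rewrite hu0 muln0 mod0n.
apply/negP => /eqP h.
have : m %| p * u by rewrite /dvdn h.
rewrite Gauss_dvdr ?coprime_mp // => /dvdn_leq.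
rewrite lt0n hu0 => /(_ isT); have := pr_gt1; lia.
Qed.

Lemma sp_shift u : u < p ^ r -> sp p (shift p r u) = sp p u.
Proof.
move=> hu; rewrite /shift; have [//|hne] := eqVneq u m.
case: r Hr hu hne => [//|r'] _ hu hne.
set P := p ^ r'.
have hP : p ^ r'.+1 = p * P by rewrite expnS.
set a := u %/ P; set b := u %% P.
have hP0 : 0 < P by rewrite expn_gt0 Hp0.
have hb : b < P by rewrite ltn_mod.
have ha : a < p by rewrite ltn_divLR // -hP.
have hu2 : u = b + P * a by rewrite /b /a addnC mulnC -divn_eq.
have hsu : (p * u) %% (p ^ r'.+1 - 1) = a + p * b.
  rewrite hP hu2.
  have -> : p * (b + P * a) = a * (p * P - 1) + (a + p * b).
    have : 1 <= p * P by rewrite muln_gt0 Hp0.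
    nia.
  rewrite modnMDl modn_small //.
  move: hne; rewrite hP hu2 => hne.
  have hb' : b <= P - 1 by lia.
  nia.
rewrite hsu.
have hs : a + p * b < p ^ r'.+1 by rewrite hP; nia.
have f1 : fd 1 a = a by rewrite fdS /fd big_ord0 addn0 modn_small.
rewrite (sp_fd hu) (sp_fd hs) [in RHS]hu2.
rewrite -[in p * b](expn1 p) -[r'.+1]add1n fd_split ?expn1 //.
by rewrite -[1 + r']addnC fd_split // f1 addnC.
Qed.

End Aux.

Section UL.
Variables (n : nat) (D : {fset vec n}) (p : nat).
Hypothesis Hpr : prime p.
Let Hp : 1 < p := prime_gt1 Hpr.
Let Hp0 : 0 < p := ltnW Hp.
Variable r : nat.
Hypothesis Hr : 0 < r.
Local Notation m := (p ^ r - 1).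
Local Notation sU := (shiftU p r).

Definition inrange (U : famD D) := forall d, U d < p ^ r.

Lemma iter_shiftU k (U : famD D) :
  iter k sU U = [ffun d => iter k (shift p r) (U d)].
Proof.
elim: k => [|k IH]; first by apply/ffunP => d; rewrite ffunE.
by rewrite iterS IH; apply/ffunP => d; rewrite !ffunE.
Qed.

Lemma iterU_lt k (U : famD D) : inrange U -> inrange (iter k sU U).
Proof.
move=> hU d; rewrite iter_shiftU ffunE.
elim: k => [|k IH] //=; exact: shift_lt.
Qed.

Lemma iterU_r (U : famD D) : inrange U -> iter r sU U = U.
Proof.
move=> hU; rewrite iter_shiftU; apply/ffunP => d; rewrite ffunE.
exact: iter_shift_r.
Qed.

Lemma iterU_mod a (U : famD D) : inrange U -> iter a sU U = iter (a %% r) sU U.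
Proof.
move=> hU; rewrite {1}(divn_eq a r) addnC iterD; congr (iter _ _ _).
elim: (a %/ r) => [|q IH] //; by rewrite mulSn iterD IH iterU_r.
Qed.

Lemma phi_iter (U : famD D) i k : inrange U -> phi p r (iter k sU U) i = phi p r U (i + k).
Proof.
move=> hU; rewrite /phi; apply/ffunP => j; rewrite !ffunE -iterD.
by rewrite (iterU_mod (i %% r + k)) // modnDml.
Qed.

Lemma phi_mod (U : famD D) k : phi p r U (k %% r) = phi p r U k.
Proof. by rewrite /phi modn_mod. Qed.

Lemma wsum_mod (U : famD D) j : wsum (sU U) j %% m = (p * wsum U j) %% m.
Proof.
rewrite /wsum -modn_summ big_distrr /= -[RHS]modn_summ; congr (_ %% _).
apply: eq_bigr => d _; rewrite ffunE -modnMml shift_mod modnMml.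
by rewrite mulnA.
Qed.

Lemma wsum_eq0 (U : famD D) j : inrange U -> (wsum (sU U) j == 0) = (wsum U j == 0).
Proof.
move=> hU; rewrite /wsum !sum_nat_eq0; apply: eq_forallb => d.
by rewrite ffunE !muln_eq0 shift_eq0.
Qed.

Lemma spU_shift (U : famD D) : inrange U -> spU p (sU U) = spU p U.
Proof.
move=> hU; rewrite /spU; apply: eq_bigr => d _; rewrite ffunE.
exact: sp_shift.
Qed.

Lemma inE_shift (U : famD D) : Defs.inE p r U -> Defs.inE p r (sU U).
Proof.
case/and4P => h0 /forallP hlt /forallP hdv /forallP hpos.
have hU : inrange U by move=> d; exact: hlt d.
apply/and4P; split => //; apply/forallP => j.
- by rewrite ffunE shift_lt.
- rewrite /dvdn wsum_mod -modnMmr; move: (hdv j); rewrite /dvdn => /eqP ->.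
  by rewrite muln0 mod0n.
- by rewrite lt0n wsum_eq0 // -lt0n.
Qed.

End UL.

Theorem lemma2p9 (n : nat) (D : {fset vec n}) (p : nat) :
  prime p ->
  (forall j : 'I_n, exists d : D, (val d) j != 0) ->
  (* (i) pairwise disjoint *)
  (forall r r' (U : famD D), MI p r U -> MI p r' U -> r = r') /\
  (* (ii) empty for r large *)
  (exists R, forall r, R <= r -> forall U : famD D, ~ MI p r U) /\
  (* (iii) *)
  (forall r (U : famD D), MI p r U ->
     MI p r (shiftU p r U) /\
     forall i k, phi p r (iter k (shiftU p r) U) i = phi p r U (i + k)).
Proof.
move=> Hpr Hcov.
have Hp : 1 < p := prime_gt1 Hpr.
have base : forall r (U : famD D), Defs.inE p r U -> 0 < r /\ inrange p r U.
  move=> r U; case/and4P => h0 /forallP hlt _ _; split => // d; exact: hlt d.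
split; [|split].
-
  have r1 : n = 0 -> forall r (U : famD D), Defs.inE p r U -> irreducibleU p r U -> r = 1.
    move=> n0 r U hin hirr; have [hr _] := base _ _ hin.
    case: (ltnP 1 r) => h; last by lia.
    have := hirr 0 1 hr h; rewrite /= => H.
    suff : 0 = 1 by [].
    apply: H; apply/ffunP => j; exfalso; have := ltn_ord j; lia.
  move=> r r' U [[hin hmin] hirr] [[hin' hmin'] hirr'].
  case: (posnP n) => [n0|npos].
    by rewrite (r1 n0 _ _ hin hirr) (r1 n0 _ _ hin' hirr').
  have hw : 0 < wsum U (Ordinal npos) by case/and4P: hin => _ _ _ /forallP.
  have hs : spU p U != 0.
    apply/negP; rewrite /spU sum_nat_eq0 => /forallP hall.
    move: hw; rewrite lt0n /wsum sum_nat_eq0 => /negP; apply; apply/forallP => d.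
    by rewrite (sp_eq0 Hpr (eqP (hall d))) mul0n.
  move: hmin hmin'; set dl := delta _ _ => hmin hmin'.
  have hnz : ((p.-1)%:R * dl != 0 :> rat)%R.
    apply/negP => /eqP h0; move: hs; rewrite -(eqr_nat rat) hmin mulrAC h0 mul0r.
    by rewrite eqxx.
  apply/eqP; rewrite -(eqr_nat rat); apply/eqP; apply: (mulfI hnz).
  by rewrite !(mulrAC _ dl) -hmin -hmin'.
-
  set C := \sum_(j < n) \sum_(d : D) val d j.
  exists ((C.+1 ^ n).+1) => r hR U [[hin _] hirr].
  have [hr hU] := base _ _ hin.
  have hb : forall i j, phi p r U i j <= C.
    move=> i j; rewrite /phi ffunE.
    have hV := iterU_lt Hpr hr (i %% r) hU.
    apply: (@leq_trans (\sum_(d : D) val d j)); last by rewrite /C (bigD1 j) //= leq_addr.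
    have hm : 0 < p ^ r - 1 by exact: (m_gt0 Hpr hr).
    apply: leq_trans (leq_div2r (p ^ r - 1) (_ : _ <= (\sum_(d : D) val d j) * (p ^ r - 1))) _.
      rewrite /wsum big_distrl; apply: leq_sum => d _.
      rewrite mulnC leq_mul2l; apply/orP; right; have := hV d; lia.
    by rewrite mulnK.
  pose f := fun i : 'I_r => [ffun j => (inord (phi p r U i j) : 'I_C.+1)].
  have finj : injective f.
    move=> i i' /ffunP h; apply: val_inj; apply: hirr (ltn_ord i) (ltn_ord i') _.
    apply/ffunP => j; have := h j.
    have hb1 := hb i j; have hb2 := hb i' j; rewrite /phi !ffunE in hb1 hb2 *.
    by move=> /(congr1 (@nat_of_ord _)); rewrite !inordK // ltnS.
  have := leq_card _ finj; rewrite card_ord card_ffun !card_ord; lia.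
-
  move=> r U [[hin hmin] hirr].
  have [hr hU] := base _ _ hin.
  split; last by move=> i k; apply: (phi_iter Hpr hr).
  split; [split|].
  + exact: (inE_shift Hpr hr).
  + by rewrite (spU_shift Hpr hr).
  + move=> i j hi hj; rewrite -[shiftU p r U]/(iter 1 (shiftU p r) U) !(phi_iter Hpr hr) // => h.
    have := hirr _ _ (ltn_pmod (i + 1) hr) (ltn_pmod (j + 1) hr).
    rewrite !phi_mod => /(_ h) e.
    have hm : forall x, x < r -> (x + 1) %% r = if x.+1 == r then 0 else x.+1.
      move=> x hx; rewrite addn1; case: eqP => [->|ne]; first by rewrite modnn.
      rewrite modn_small //; lia.
    move: e; rewrite !hm //; do 2 case: eqP; lia.
Qed.
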